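(* Let $A$ be a nonnegative column-stochastic $n\times m$ matrix. If $\operatorname{rank}_+(A)\leqslant r$, then there is a polytope $P$ satisfying $\mathcal{P}_{in}(A)\subset P\subset\mathcal{P}_{out}(A)$ and $\operatorname{ic}(P)\leqslant r$.
   Context: $\operatorname{rank}_+(A)$ is the smallest $k$ such that $A$ is a sum of $k$ nonnegative rank-one matrices. A matrix is column-stochastic if each column has entries summing to $1$; so the columns of a nonnegative column-stochastic matrix lie in the standard simplex $\Delta_n=\{x\in\mathbb{R}^n: x_1+\cdots+x_n=1,\ x_i\geqslant 0\}$. $\operatorname{col}(A)$ is the linear span of the columns of $A$; $\mathcal{P}_{out}(A)=\Delta_n\cap\operatorname{col}(A)$ and $\mathcal{P}_{in}(A)$ is the convex hull of the columns of $A$. For polytopes $P\subset\mathbb{R}^d$ and $Q\subset\mathbb{R}^N$ ($N\geqslant d$), $P$ is a slice of $Q$ if $P\times\{0\}=Q\cap H$ where $H=\{x\in\mathbb{R}^N: x_{d+1}=\cdots=x_N=0\}$ (identifying $\mathbb{R}^d$ with $H$). The intersection complexity $\operatorname{ic}(P)$ is the smallest integer $k$ such that $P$ is a slice of a polytope with $k$ vertices. *)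

(* Defs.v *)
From HB Require Import structures.
From mathcomp Require Import all_boot all_order all_algebra.
Set Implicit Arguments. Unset Strict Implicit. Unset Printing Implicit Defensive.
Import Order.TTheory GRing.Theory Num.Theory.
Local Open Scope ring_scope.

Section Defs.
Variable R : realFieldType.

Definition nonneg_mx (p q : nat) (B : 'M[R]_(p, q)) : Prop :=
  forall i j, 0 <= B i j.

Definition col_stochastic (n m : nat) (A : 'M[R]_(n, m)) : Prop :=
  nonneg_mx A /\ forall j, \sum_i A i j = 1.

Definition nonneg_rank_le (n m : nat) (A : 'M[R]_(n, m)) (r : nat) : Prop :=
  exists k : nat, (k <= r)%N /\
    exists B : 'I_k -> 'M[R]_(n, m),
      (forall i, nonneg_mx (B i) /\ \rank (B i) = 1%N) /\ A = \sum_(i < k) B i.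

Definition conv (d k : nat) (M : 'M[R]_(d, k)) (x : 'cV[R]_d) : Prop :=
  exists l : 'cV[R]_k, (forall i, 0 <= l i 0) /\ \sum_i l i 0 = 1 /\ x = M *m l.

Definition is_polytope (d : nat) (P : 'cV[R]_d -> Prop) : Prop :=
  exists k (M : 'M[R]_(d, k)), forall x, P x <-> conv M x.

Definition extreme (d : nat) (Q : 'cV[R]_d -> Prop) (x : 'cV[R]_d) : Prop :=
  Q x /\ forall y z t, Q y -> Q z -> 0 < t -> t < 1 ->
    x = t *: y + (1 - t) *: z -> y = x /\ z = x.

Definition polytope_with_vertices (N : nat) (Q : 'cV[R]_N -> Prop) (k : nat) : Prop :=
  is_polytope Q /\
  exists V : 'M[R]_(N, k), injective (fun j : 'I_k => col j V) /\
    forall x, extreme Q x <-> exists j, x = col j V.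

Definition slice (d e : nat) (P : 'cV[R]_d -> Prop) (Q : 'cV[R]_(d + e) -> Prop) : Prop :=
  forall x : 'cV[R]_(d + e),
    (Q x /\ dsubmx x = 0) <-> (P (usubmx x) /\ dsubmx x = 0).

Definition ic_le (d : nat) (P : 'cV[R]_d -> Prop) (r : nat) : Prop :=
  exists (e k : nat) (Q : 'cV[R]_(d + e) -> Prop),
    (k <= r)%N /\ polytope_with_vertices Q k /\ slice P Q.

Definition simplex (n : nat) (x : 'cV[R]_n) : Prop :=
  (forall i, 0 <= x i 0) /\ \sum_i x i 0 = 1.

Definition P_out (n m : nat) (A : 'M[R]_(n, m)) (x : 'cV[R]_n) : Prop :=
  simplex x /\ exists y : 'cV[R]_m, x = A *m y.

Definition P_in (n m : nat) (A : 'M[R]_(n, m)) (x : 'cV[R]_n) : Prop := conv A x.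

End Defs.

(* Main.v *)
Require Import Defs.
From HB Require Import structures.
From mathcomp Require Import all_boot all_order all_algebra.
From mathcomp Require Import ring lra.
From Stdlib Require Import Classical.
Import Order.TTheory GRing.Theory Num.Theory.
Local Open Scope ring_scope.
Set Implicit Arguments. Unset Strict Implicit. Unset Printing Implicit Defensive.

Section Aux.
Variable R : realFieldType.

Lemma conv_col d k (M : 'M[R]_(d,k)) j : conv M (col j M).
Proof.
exists (delta_mx j 0); split; [|split].
- by move=> i; rewrite mxE ler0n.
- rewrite (bigD1 j) //= mxE !eqxx /= big1 ?addr0 // => i /negbTE Hi.
  by rewrite mxE Hi.
- by rewrite colE.
Qed.

Lemma conv_comb d k (M : 'M[R]_(d,k)) a b t :
  conv M a -> conv M b -> 0 <= t -> t <= 1 -> conv M (t *: a + (1 - t) *: b).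
Proof.
move=> [la [la0 [la1 ->]]] [lb [lb0 [lb1 ->]]] t0 t1.
exists (t *: la + (1 - t) *: lb); split; [|split].
- move=> i; rewrite !mxE; apply: addr_ge0; apply: mulr_ge0 => //; lra.
- under eq_bigr do rewrite !mxE.
  by rewrite big_split /= -!mulr_sumr la1 lb1 !mulr1 addrC subrK.
- by rewrite mulmxDr !scalemxAr.
Qed.

Definition mxs d (s : seq 'cV[R]_d) : 'M[R]_(d, size s) :=
  \matrix_(i < d, j < size s) (nth 0 s j) i 0.

Lemma col_mxs d (s : seq 'cV[R]_d) (j : 'I_(size s)) : col j (mxs s) = nth 0 s j.
Proof. by apply/matrixP => i j'; rewrite !mxE (ord1 j'). Qed.

Lemma conv_mem d (s : seq 'cV[R]_d) x : x \in s -> conv (mxs s) x.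
Proof.
move=> xs; have := conv_col (mxs s) (Ordinal (etrans (index_mem x s) xs)).
by rewrite col_mxs nth_index.
Qed.

Lemma extreme_col d k (M : 'M[R]_(d,k)) x :
  extreme (conv M) x -> exists j, x = col j M.
Proof.
move=> [[l [l0 [l1 xE]]] Hex].
have [j ljpos] : exists j, 0 < l j 0.
  apply/not_all_not_ex => H.
  have : \sum_i l i 0 = 0.
    by apply: big1 => i _; apply/eqP; rewrite eq_le l0 andbT leNgt; apply/negP; apply: H.
  by rewrite l1 => /eqP; rewrite oner_eq0.
exists j.
have [lj1|ljlt1] := eqVneq (l j 0) 1.
  have Hz : forall i, i != j -> l i 0 = 0.
    have : \sum_(i | i != j) l i 0 = 0.
      by move: l1; rewrite (bigD1 j) //= lj1 -{2}(addr0 1) => /addrI.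
    by apply: psumr_eq0P => i _; exact: l0.
  rewrite xE colE; congr (_ *m _).
    apply/matrixP => i i'; rewrite (ord1 i') mxE eqxx andbT.
  by have [->|ij] := eqVneq i j; [rewrite lj1 | rewrite Hz].
have ljlt : l j 0 < 1.
  have : l j 0 <= 1.
    rewrite -l1 (bigD1 j) //= lerDl; apply: sumr_ge0 => i _; exact: l0.
  by rewrite le_eqVlt (negbTE ljlt1).
pose t := l j 0.
set l' := (1 - t)^-1 *: (l - t *: delta_mx j 0).
have t1 : 1 - t != 0 by rewrite subr_eq0 eq_sym lt_eqF.
have Hz : conv M (M *m l').
  exists l'; split; [|split] => //.
  - move=> i; rewrite !mxE; apply: mulr_ge0; first by rewrite invr_ge0 subr_ge0 ltW.
    have [->|ij] := eqVneq i j; first by rewrite eqxx mulr1 subrr.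
    by rewrite mulr0 subr0.
  - rewrite (eq_bigr (fun i => (1-t)^-1 * (l i 0 - t * (i == j)%:R))); last first.
      by move=> i _; rewrite /l' !mxE andbT.
    rewrite -mulr_sumr sumrB l1 (bigD1 j) //= big1 ?addr0; last first.
      by move=> i /negbTE ij; rewrite ij mulr0.
    by rewrite !eqxx mulr1 mulVf.
have := Hex (col j M) (M *m l') t (conv_col M j) Hz ljpos ljlt.
case.
  rewrite xE /l' -scalemxAr scalerA mulfV // scale1r mulmxBr -scalemxAr -colE.
  by rewrite addrC subrK.
by move=> -> _.
Qed.

End Aux.
Section Poly.
Variable R : realFieldType.
Variables (q k : nat) (C : 'M[R]_(q, k)).

Definition SJ (J : {set 'I_k}) (y : 'cV[R]_k) :=
  (forall i, 0 <= y i 0) /\ \sum_i y i 0 = 1 /\ C *m y = 0 /\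
  forall i, i \notin J -> y i 0 = 0.

Definition kerJ (J : {set 'I_k}) (v : 'cV[R]_k) :=
  C *m v = 0 /\ \sum_i v i 0 = 0 /\ forall i, i \notin J -> v i 0 = 0.

Lemma neg_entry (v : 'cV[R]_k) : v != 0 -> \sum_i v i 0 = 0 -> exists i, v i 0 < 0.
Proof.
move=> vn0 vs; apply/not_all_not_ex => H; move/eqP: vn0; apply.
apply/matrixP => i j; rewrite (ord1 j) mxE.
apply: (psumr_eq0P _ vs) => // i' _.
by rewrite leNgt; apply/negP; apply: H.
Qed.

Lemma ratio (J : {set 'I_k}) y v : SJ J y -> (forall i, i \in J -> 0 < y i 0) ->
  kerJ J v -> (exists i, v i 0 < 0) ->
  exists t, 0 < t /\ SJ J (y + t *: v) /\ exists i, i \in J /\ (y + t *: v) i 0 = 0.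
Proof.
move=> [y0 [y1 [yC yJ]]] ypos [vC [vs vJ]] [i0 vi0].
have i0J : i0 \in J.
  apply/negPn/negP => /vJ H; by move: vi0; rewrite H ltxx.
pose F i := - v i 0 / y i 0.
have Fi0 : 0 < F i0 by rewrite /F divr_gt0 ?oppr_gt0 ?ypos.
case: (@arg_maxP _ _ _ i0 (fun i => i \in J) F i0J) => i1 i1J Hmax.
pose rho := F i1.
have rpos : 0 < rho by apply: lt_le_trans Fi0 _; apply: Hmax.
have ypos1 := ypos _ i1J.
have vi1 : v i1 0 != 0.
  apply/eqP => H; move: rpos; by rewrite /rho /F H oppr0 mul0r ltxx.
exists rho^-1; split; first by rewrite invr_gt0.
split; last first.
  exists i1; split => //; rewrite !mxE /rho /F.
  field; apply/andP; split => //; by rewrite lt0r_neq0.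
split; [|split; [|split]].
- move=> i; rewrite !mxE.
  have [iJ|iJ] := boolP (i \in J); last by rewrite yJ // vJ // mulr0 addr0.
  have Fi : F i <= rho := Hmax i iJ; have yi := ypos i iJ.
  move: Fi; rewrite /F ler_pdivrMr // => Fi.
  have -> : y i 0 + rho^-1 * v i 0 = rho^-1 * (rho * y i 0 + v i 0).
    by field; rewrite lt0r_neq0.
  apply: mulr_ge0; first by rewrite invr_ge0 ltW.
  lra.
- under eq_bigr do rewrite !mxE.
  by rewrite big_split /= -mulr_sumr y1 vs mulr0 addr0.
- by rewrite mulmxDr -scalemxAr yC vC scaler0 addr0.
- by move=> i iJ; rewrite !mxE yJ // vJ // mulr0 addr0.
Qed.


Definition uniqS J y0 := SJ J y0 /\ forall y, SJ J y -> y = y0.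

Lemma SJ_sub (J J' : {set 'I_k}) y : SJ J y -> (forall i, i \notin J' -> y i 0 = 0) -> SJ J' y.
Proof. by move=> [? [? [? _]]] H; split; [|split; [|split]]. Qed.

Lemma build (L : seq {set 'I_k}) : exists s : seq 'cV[R]_k,
  (forall x, x \in s -> SJ setT x) /\ forall J y0, J \in L -> uniqS J y0 -> y0 \in s.
Proof.
elim: L => [|J L [s [Hs HL]]]; first by exists [::].
case: (classic (exists y0, uniqS J y0)) => [[y0 Hy0]|Hn].
  exists (y0 :: s); split.
    move=> x; rewrite inE => /orP [/eqP ->|xs]; last exact: Hs.
    by apply: (SJ_sub (proj1 Hy0)) => i; rewrite in_setT.
  move=> J' y1; rewrite inE => /orP [/eqP ->|J'L] Hy1.
    have -> : y1 = y0 by apply: (proj2 Hy0); exact: (proj1 Hy1).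
    by rewrite inE eqxx.
  by rewrite inE (HL J') ?orbT.
exists s; split => // J' y1; rewrite inE => /orP [/eqP ->|J'L] Hy1.
  by exfalso; apply: Hn; exists y1.
exact: (HL J').
Qed.


Lemma main_ind (s : seq 'cV[R]_k) :
  (forall J y0, uniqS J y0 -> y0 \in s) ->
  forall n (J : {set 'I_k}) y, (#|J| <= n)%N -> SJ J y -> conv (mxs s) y.
Proof.
move=> Hs; elim=> [|n IH] J y.
  rewrite leqn0 => /eqP /cards0_eq -> [_ [y1 [_ yJ]]].
  exfalso; move: y1; rewrite big1 => [/eqP|i _]; first by rewrite eq_sym oner_eq0.
  by apply: yJ; rewrite in_set0.
rewrite leq_eqVlt ltnS => /orP [/eqP cJ|]; last exact: IH.
move=> Hy.
case: (classic (exists v, v != 0 /\ kerJ J v)) => [[v [vn0 Hv]]|Hn]; last first.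
  apply: conv_mem; apply: (Hs J); split => // y' Hy'.
  apply/eqP; rewrite -subr_eq0; apply/eqP.
  apply: NNPP => Hne; apply: Hn; exists (y' - y); split; first by apply/eqP.
  case: Hy => [_ [y1 [yC yJ]]]; case: Hy' => [_ [y1' [yC' yJ']]].
  split; [|split].
  - by rewrite mulmxBr yC yC' subrr.
  - under eq_bigr do rewrite !mxE.
    by rewrite sumrB y1 y1' subrr.
  - by move=> i iJ; rewrite !mxE yJ // yJ' // subrr.
have H0 : forall z, SJ J z -> (exists i, i \in J /\ z i 0 = 0) -> conv (mxs s) z.
  move=> z Hz [i [iJ zi]]; apply: (IH (J :\ i)).
    by move: cJ; rewrite (cardsD1 i J) iJ add1n => -[->].
  apply: (SJ_sub Hz) => j; rewrite in_setD1 negb_and negbK => /orP [/eqP ->|] //.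
  exact: (proj2 (proj2 (proj2 Hz))).
case: (classic (exists i, i \in J /\ y i 0 = 0)) => [|Hall]; first exact: H0.
have ypos : forall i, i \in J -> 0 < y i 0.
  move=> i iJ; rewrite lt_def (proj1 Hy) andbT; apply/eqP => H.
  by apply: Hall; exists i.
have Hv' : kerJ J (- v).
  case: Hv => [vC [vs vJ]]; split; [|split].
  - by rewrite mulmxN vC oppr0.
  - under eq_bigr do rewrite !mxE.
    by rewrite sumrN vs oppr0.
  - by move=> i iJ; rewrite !mxE vJ // oppr0.
have [t1 [t1p [Ha Za]]] := ratio Hy ypos Hv (neg_entry vn0 (proj1 (proj2 Hv))).
have vn0' : - v != 0 by rewrite oppr_eq0.
have [t2 [t2p [Hb Zb]]] := ratio Hy ypos Hv' (neg_entry vn0' (proj1 (proj2 Hv'))).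
have ca := H0 _ Ha Za; have cb := H0 _ Hb Zb.
have t12 : 0 < t1 + t2 by apply: addr_gt0.
have -> : y = t2/(t1+t2) *: (y + t1 *: v) + (1 - t2/(t1+t2)) *: (y + t2 *: - v).
  apply/matrixP => i j; rewrite !mxE; field; by rewrite lt0r_neq0.
apply: conv_comb => //; first by rewrite divr_ge0 // ltW.
by rewrite ler_pdivrMr // mul1r lerDr ltW.
Qed.

Lemma conv_SJ p (N : 'M[R]_(k,p)) y :
  (forall j, SJ setT (col j N)) -> conv N y -> SJ setT y.
Proof.
move=> HN [l [l0 [l1 ->]]].
have Ne : forall i j, 0 <= N i j.
  by move=> i j; have := (proj1 (HN j)) i; rewrite mxE.
have Ns : forall j, \sum_i N i j = 1.
  by move=> j; rewrite -(proj1 (proj2 (HN j))); apply: eq_bigr => i _; rewrite mxE.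
split; [|split; [|split]].
- move=> i; rewrite mxE; apply: sumr_ge0 => j _; apply: mulr_ge0 => //.
- under eq_bigr do rewrite mxE.
  rewrite exchange_big /=.
  rewrite -l1; apply: eq_bigr => j _; by rewrite -mulr_suml Ns mul1r.
- rewrite mulmxA; have -> : C *m N = 0.
    apply/matrixP => i j; rewrite mxE.
    have := congr1 (fun M : 'cV[R]_q => M i 0) (proj1 (proj2 (proj2 (HN j)))).
    rewrite !mxE => H; apply: (etrans _ H); apply: eq_bigr => t _; by rewrite mxE.
  by rewrite mul0mx.
- by move=> i; rewrite in_setT.
Qed.

Lemma S_poly : exists p (N : 'M[R]_(k,p)), forall y, SJ setT y <-> conv N y.
Proof.
have [s [Hs HL]] := build (enum [set: {set 'I_k}]).
exists (size s), (mxs s) => y; split.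
- move=> Hy; apply: (@main_ind s _ k setT) => //.
    by move=> J y0; apply: HL; rewrite mem_enum inE.
  by rewrite cardsT card_ord.
- apply: conv_SJ => j; rewrite col_mxs; apply: Hs; apply: mem_nth.
  exact: ltn_ord.
Qed.

End Poly.

Section Main.
Variable R : realFieldType.

Lemma rank1_fact n m (B : 'M[R]_(n,m)) : nonneg_mx B -> \rank B = 1%N ->
  exists (u : 'cV[R]_n) (w : 'rV[R]_m), nonneg_mx u /\ nonneg_mx w /\ B = u *m w.
Proof.
move=> B0 rB.
have [c [r Bcr]] : exists (c : 'cV[R]_n) (r : 'rV[R]_m), B = c *m r.
  move: (mulmx_base B); move: (col_base B) (row_base B); rewrite rB => c r <-.
  by exists c, r.
have Be : forall i j, B i j = c i 0 * r 0 j.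
  by move=> i j; rewrite Bcr mxE big_ord1.
have [i0 [j0 Bpos]] : exists i0 j0, 0 < B i0 j0.
  apply: NNPP => H.
  have B0' : B = 0.
    apply/matrixP => i j; rewrite mxE; apply/eqP; rewrite eq_le B0 andbT leNgt.
    by apply/negP => Hp; apply: H; exists i, j.
  by move: rB; rewrite B0' mxrank0.
exists (col j0 B), ((B i0 j0)^-1 *: row i0 B); split; [|split].
- by move=> i j; rewrite mxE.
- by move=> i j; rewrite !mxE; apply: mulr_ge0 => //; rewrite invr_ge0 ltW.
- apply/matrixP => i j; rewrite !mxE big_ord1 !mxE !Be.
  have : c i0 0 * r 0 j0 != 0 by rewrite -Be lt0r_neq0.
  rewrite mulf_eq0 negb_or => /andP [h1 h2].
  by field; rewrite h1 h2.
Qed.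

Lemma fact_UW n m (A : 'M[R]_(n,m)) r : nonneg_rank_le A r ->
  exists k (U : 'M[R]_(n,k)) (W : 'M[R]_(k,m)),
    (k <= r)%N /\ nonneg_mx U /\ nonneg_mx W /\ A = U *m W.
Proof.
move=> [k [kr [B [HB ->]]]].
have H : forall t : 'I_k, exists uw : 'cV[R]_n * 'rV[R]_m,
    nonneg_mx uw.1 /\ nonneg_mx uw.2 /\ B t = uw.1 *m uw.2.
  move=> t; have [u [w Huw]] := rank1_fact (proj1 (HB t)) (proj2 (HB t)).
  by exists (u, w).
have [f Hf] : exists f : 'I_k -> 'cV[R]_n * 'rV[R]_m, forall t,
    nonneg_mx (f t).1 /\ nonneg_mx (f t).2 /\ B t = (f t).1 *m (f t).2.
  exact: (fin_all_exists H).
exists k, (\matrix_(a, t) (f t).1 a 0), (\matrix_(t, b) (f t).2 0 b).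
split => //; split; [|split].
- by move=> i j; rewrite mxE; apply: (proj1 (Hf j)).
- by move=> i j; rewrite mxE; apply: (proj1 (proj2 (Hf i))).
- apply/matrixP => a b; rewrite summxE mxE; apply: eq_bigr => t _.
  by rewrite !mxE (proj2 (proj2 (Hf t))) mxE big_ord1.
Qed.

Lemma normalize n m k (A : 'M[R]_(n,m.+1)) (U : 'M[R]_(n,k)) W :
  col_stochastic A -> nonneg_mx U -> nonneg_mx W -> A = U *m W ->
  exists (U' : 'M[R]_(n,k)) (W' : 'M[R]_(k,m.+1)), nonneg_mx U' /\
    (forall t, \sum_a U' a t = 1) /\ nonneg_mx W' /\ A = U' *m W'.
Proof.
move=> [A0 A1] U0 W0 AE.
pose s t := \sum_a U a t.
have s0 : forall t, 0 <= s t by move=> t; apply: sumr_ge0 => a _.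
have Uz : forall t a, s t = 0 -> U a t = 0.
  by move=> t a h; apply: (psumr_eq0P _ h).
exists (\matrix_(a < n, t < k) (if s t == 0 then A a 0 else U a t / s t)),
  (\matrix_(t < k, b < m.+1) (s t * W t b)); split; [|split; [|split]].
- move=> i j; rewrite mxE; case: eqP => _ //; exact: divr_ge0.
- move=> t; under eq_bigr do rewrite mxE.
  case: eqP => h; first exact: A1.
  by rewrite -mulr_suml mulfV //; apply/eqP.
- by move=> i j; rewrite mxE; apply: mulr_ge0.
- apply/matrixP => a b; rewrite [in LHS]AE !mxE; apply: eq_bigr => t _.
  rewrite !mxE; case: eqP => h; first by rewrite h mul0r mulr0 Uz // mul0r.
  by field; apply/eqP.
Qed.

Lemma dedup d (Q : 'cV[R]_d -> Prop) (cs : seq 'cV[R]_d) : exists w,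
  uniq w /\ (size w <= size cs)%N /\ forall x, x \in w <-> (x \in cs /\ Q x).
Proof.
elim: cs => [|c cs [w [wu [ws Hw]]]].
  by exists [::]; split => //; split => // x; rewrite in_nil; split => // -[].
case: (classic (Q c /\ c \notin w)) => [[Qc cw]|Hn].
  exists (c :: w); split; first by rewrite /= cw.
  split; first by rewrite /= ltnS.
  move=> x; rewrite !inE; split.
    by case/orP => [/eqP ->|/Hw [-> Qx]]; [rewrite eqxx | rewrite orbT].
  case=> /orP [/eqP ->|xcs] Qx; first by rewrite eqxx.
  by apply/orP; right; apply/Hw.
exists w; split => //; split; first by apply: (leq_trans ws).
move=> x; rewrite inE; split.
  by move/Hw => [-> Qx]; rewrite orbT.
case=> /orP [/eqP ->|xcs] Qx; last by apply/Hw.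
by apply: NNPP => cw; apply: Hn; split => //; apply/negP.
Qed.

Lemma conv_vertices d k (M : 'M[R]_(d,k)) :
  exists k', (k' <= k)%N /\ polytope_with_vertices (conv M) k'.
Proof.
have [w [wu [ws Hw]]] := dedup (extreme (conv M)) [seq col j M | j <- enum 'I_k].
exists (size w); split; first by move: ws; rewrite size_map size_enum_ord.
split; first by exists k, M.
exists (mxs w); split.
  move=> j1 j2 /=; rewrite !col_mxs => /eqP; rewrite nth_uniq // => /eqP.
  exact: val_inj.
move=> x; split.
  move=> Hx; have [j xE] := extreme_col Hx.
  have xw : x \in w by apply/Hw; split => //; rewrite xE; apply: map_f; rewrite mem_enum.
  exists (Ordinal (etrans (index_mem x w) xw)).
  by rewrite col_mxs nth_index.
move=> [j ->]; rewrite col_mxs.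
by have /Hw [] := mem_nth 0 (ltn_ord j).
Qed.

Lemma colspace n m (A : 'M[R]_(n,m)) (x : 'cV[R]_n) :
  (exists y, x = A *m y) <-> (cokermx A^T)^T *m x = 0.
Proof.
have -> : (cokermx A^T)^T *m x = (x^T *m cokermx A^T)^T by rewrite [RHS]trmx_mul trmxK.
split.
  move=> [y ->]; have : (y^T *m A^T <= A^T)%MS by apply: submxMl.
  by rewrite submxE -trmx_mul => /eqP ->; rewrite trmx0.
move=> H; have : (x^T <= A^T)%MS.
  by rewrite submxE; apply/eqP; apply: trmx_inj; rewrite H trmx0.
case/submxP => D HD; exists D^T.
by rewrite -(trmxK x) HD trmx_mul trmxK.
Qed.

End Main.

Unset Implicit Arguments.
Theorem proposition1 (R : realFieldType) (n m r : nat) (A : 'M[R]_(n, m)) :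
  col_stochastic A -> nonneg_rank_le A r ->
  exists P : 'cV[R]_n -> Prop,
    is_polytope P /\
    (forall x, P_in A x -> P x) /\
    (forall x, P x -> P_out A x) /\
    ic_le P r.
Proof.
move=> HA Hr.
have [k [U [W [kr [U0 [W0 AE]]]]]] := fact_UW Hr.
destruct m as [|m'].
  exists (conv (0 : 'M[R]_(n,0))); split; first by exists 0%N, 0.
  have E0 : forall d (x : 'cV[R]_d) (M : 'M[R]_(d,0)), ~ conv M x.
    by move=> d x M [l [_ [l1 _]]]; move: l1; rewrite big_ord0 => /eqP; rewrite eq_sym oner_eq0.
  split; first by move=> x /E0.
  split; first by move=> x /E0.
  have [k' [k'0 Hv]] := conv_vertices (0 : 'M[R]_(n + 0, 0)).
  exists 0%N, k', (conv (0 : 'M[R]_(n+0,0))); split; first by apply: leq_trans k'0 _.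
  split => // x; split; by move=> [/E0].
have [U' [W' [U'0 [U'1 [W'0 AE']]]]] := normalize HA U0 W0 AE.
pose L := (cokermx A^T)^T.
have HL : forall x, (exists y, x = A *m y) <-> L *m x = 0 := fun x => colspace A x.
pose C := L *m U'.
have [p [N HN]] := S_poly C.
pose P x := exists l, SJ C setT l /\ x = U' *m l.
exists P; split.
  exists p, (U' *m N) => x; split.
    move=> [l [Hl ->]]; have [mu [mu0 [mu1 ->]]] := (HN l).1 Hl.
    by exists mu; rewrite mulmxA.
  move=> [mu [mu0 [mu1 ->]]]; exists (N *m mu); split; last by rewrite mulmxA.
  by apply/HN; exists mu.
split.
  move=> x [mu [mu0 [mu1 ->]]]; exists (W' *m mu); split; last by rewrite AE' mulmxA.
  split; [|split; [|split]].
  - move=> i; rewrite mxE; apply: sumr_ge0 => j _; exact: mulr_ge0.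
  - under eq_bigr do rewrite mxE.
    rewrite exchange_big /= -mu1; apply: eq_bigr => b _.
    rewrite -mulr_suml.
    have -> : \sum_i W' i b = 1.
      rewrite -(proj2 HA b) AE'; under [RHS]eq_bigr do rewrite mxE.
      rewrite exchange_big; apply: eq_bigr => t _ /=.
      by rewrite -mulr_suml U'1 mul1r.
    by rewrite mul1r.
  - have := (HL (A *m mu)).1 (ex_intro _ mu erefl).
    by rewrite {1}AE' /C !mulmxA.
  - by move=> i; rewrite in_setT.
split.
  move=> x [l [[l0 [l1 [lC _]]] ->]]; split.
    split.
      move=> i; rewrite mxE; apply: sumr_ge0 => j _; exact: mulr_ge0.
    under eq_bigr do rewrite mxE.
    rewrite exchange_big /= -l1; apply: eq_bigr => t _.
    by rewrite -mulr_suml U'1 mul1r.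
  by apply/HL; rewrite mulmxA.
pose M' := col_mx U' C.
have [k' [k'k HV]] := conv_vertices M'.
exists n, k', (conv M'); split; first by apply: leq_trans kr.
split => // x; split.
  move=> [[mu [mu0 [mu1 xE]]] xd]; split => //; exists mu; split.
    split; [|split; [|split]] => //.
      by rewrite -xd xE mul_col_mx col_mxKd.
    by move=> i; rewrite in_setT.
  by rewrite xE mul_col_mx col_mxKu.
move=> [[l [[l0 [l1 [lC _]]] xu]] xd]; split => //; exists l; split => //; split => //.
by rewrite -(vsubmxK x) xu xd mul_col_mx lC.
Qed.
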